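(* In the algebra $\mathcal{B}_d$, every monomial of the form $e^{(a)}\binom{H_1}{b}f^{(c)}$ (with $a,b,c\ge0$) of degree $a+b+c=d+1$ is expressible as a $\mathbb{Q}$-linear combination of monomials of the same form $e^{(a')}\binom{H_1}{b'}f^{(c')}$ of strictly smaller degree $a'+b'+c'$ and strictly smaller height $a'+c'$. The same holds for monomials of the form $f^{(a)}\binom{H_2}{b}e^{(c)}$ (expressed via monomials $f^{(a')}\binom{H_2}{b'}e^{(c')}$).
   Context: Fix an integer $d\ge 0$. $\mathcal{B}_d$ is the associative $\mathbb{Q}$-algebra with $1$ generated by $e,f,H_1,H_2$ subject to the relations $H_1H_2=H_2H_1$, $H_1e-eH_1=e$, $H_1f-fH_1=-f$, $H_2e-eH_2=-e$, $H_2f-fH_2=f$, $ef-fe=H_1-H_2$, $H_1+H_2=d$, and $H_1(H_1-1)\cdots(H_1-d)=0$. For an element $T$ and integer $m\ge 0$, $T^{(m)}=T^m/m!$ and $\binom{T}{m}=T(T-1)\cdots(T-m+1)/m!$. The monomial $e^{(a)}\binom{H_1}{b}f^{(c)}$ (resp. $f^{(a)}\binom{H_2}{b}e^{(c)}$) has degree $a+b+c$ and height $a+c$. *)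

(* Defs.v *)
From HB Require Import structures.
From mathcomp Require Import all_boot all_order all_algebra.
Set Implicit Arguments. Unset Strict Implicit. Unset Printing Implicit Defensive.
Import Order.TTheory GRing.Theory Num.Theory.
Local Open Scope ring_scope.

Section Bd.
Variable A : algType rat.

Definition divpow (T : A) (m : nat) : A := (m`!%:R : rat)^-1 *: T ^+ m.

Definition binomA (T : A) (m : nat) : A :=
  (m`!%:R : rat)^-1 *: \prod_(i < m) (T - i%:R).

Definition Bd_rel (d : nat) (e f H1 H2 : A) : Prop :=
  H1 * H2 = H2 * H1 /\
  H1 * e - e * H1 = e /\
  H1 * f - f * H1 = - f /\
  H2 * e - e * H2 = - e /\
  H2 * f - f * H2 = f /\
  e * f - f * e = H1 - H2 /\
  H1 + H2 = d%:R /\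
  \prod_(i < d.+1) (H1 - i%:R) = 0.

Definition monoEF (e f H1 : A) (t : nat * nat * nat) : A :=
  divpow e t.1.1 * binomA H1 t.1.2 * divpow f t.2.

Definition monoFE (e f H2 : A) (t : nat * nat * nat) : A :=
  divpow f t.1.1 * binomA H2 t.1.2 * divpow e t.2.

End Bd.

Definition deg (t : nat * nat * nat) : nat := (t.1.1 + t.1.2 + t.2)%N.
Definition height (t : nat * nat * nat) : nat := (t.1.1 + t.2)%N.

(* Main.v *)
Require Import Defs.
From HB Require Import structures.
From mathcomp Require Import all_boot all_order all_algebra.
From mathcomp Require Import zify.
Set Implicit Arguments. Unset Strict Implicit. Unset Printing Implicit Defensive.
Import Order.TTheory GRing.Theory Num.Theory.
Local Open Scope ring_scope.

Section SpanDef.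
Variable V : lmodType rat.

Inductive SP (S : V -> Prop) : V -> Prop :=
 | SP0 : SP S 0
 | SPa u v : S u -> SP S v -> SP S (u + v).

Lemma SP_in (S : V -> Prop) u : S u -> SP S u.
Proof. by move=> Su; rewrite -[u]addr0; apply: SPa => //; apply: SP0. Qed.

Lemma SP_add (S : V -> Prop) u v : SP S u -> SP S v -> SP S (u + v).
Proof.
elim=> [|u1 u2 Su1 _ IH] Sv; first by rewrite add0r.
by rewrite -addrA; apply: SPa => //; apply: IH.
Qed.

Lemma SP_map (S : V -> Prop) (T : V -> Prop) (phi : V -> V) :
  phi 0 = 0 -> (forall u v, phi (u + v) = phi u + phi v) ->
  (forall u, S u -> SP T (phi u)) -> forall u, SP S u -> SP T (phi u).
Proof.
move=> p0 pD hS u; elim=> [|u1 u2 Su1 _ IH]; first by rewrite p0; apply: SP0.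
by rewrite pD; apply: SP_add => //; apply: hS.
Qed.

Lemma SP_flat (S T : V -> Prop) :
  (forall u, S u -> SP T u) -> forall u, SP S u -> SP T u.
Proof. by move=> h; apply: (@SP_map S T id). Qed.

Lemma SP_mono (S T : V -> Prop) :
  (forall u, S u -> T u) -> forall u, SP S u -> SP T u.
Proof. by move=> h; apply: SP_flat => u /h; apply: SP_in. Qed.

Lemma SP_scale (S : V -> Prop) :
  (forall k u, S u -> S (k *: u)) -> forall k u, SP S u -> SP S (k *: u).
Proof.
move=> h k; apply: (@SP_map S S (fun u => k *: u)).
- by rewrite scaler0. - by move=> u v; rewrite scalerDr.
by move=> u Su; apply: SP_in; apply: h.
Qed.

Lemma SP_sum (S : V -> Prop) n (F : 'I_n -> V) :
  (forall i, SP S (F i)) -> SP S (\sum_(i < n) F i).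
Proof.
move=> h; apply: (big_ind (SP S)); [exact: SP0| |by []].
by move=> x y; apply: SP_add.
Qed.

End SpanDef.
Section Alg.
Variable A : algType rat.
Variable d : nat.
Variables e f H : A.
Hypothesis hHe : H * e - e * H = e.
Hypothesis hHf : H * f - f * H = - f.
Hypothesis hm : \prod_(i < d.+1) (H - i%:R) = 0.

Local Notation ev := (horner_alg H).

Lemma evX : ev 'X = H. Proof. exact: horner_algX. Qed.
Lemma evC c : ev c%:P = c%:A. Proof. exact: horner_algC. Qed.
Lemma evM p q : ev (p * q) = ev p * ev q. Proof. exact: rmorphM. Qed.
Lemma evD p q : ev (p + q) = ev p + ev q. Proof. exact: rmorphD. Qed.
Lemma evB p q : ev (p - q) = ev p - ev q. Proof. exact: rmorphB. Qed.
Lemma evZ k p : ev (k *: p) = k *: ev p. Proof. by rewrite -mul_polyC evM evC mulr_algl. Qed.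
Lemma ev1 : ev 1 = 1. Proof. exact: rmorph1. Qed.
Lemma algn (n : nat) : (n%:R : rat)%:A = n%:R :> A.
Proof. by rewrite scaler_nat. Qed.
Lemma evXn (n : nat) : ev ('X - (n%:R)%:P) = H - n%:R.
Proof. by rewrite evB evX evC algn. Qed.
Lemma ev_comm p q : ev p * ev q = ev q * ev p.
Proof. by rewrite -!evM mulrC. Qed.

Definition mpol := \prod_(i < d.+1) ('X - (i%:R : rat)%:P).
Lemma ev_m : ev mpol = 0.
Proof. rewrite /mpol rmorph_prod -hm; apply: eq_bigr => i _; exact: evXn. Qed.

Lemma subr_sol (a b c : A) : a - b = c -> b = a - c.
Proof. by move=> <-; rewrite opprB addrC subrK. Qed.
Lemma eH : e * H = (H - 1) * e.
Proof. by rewrite mulrBl mul1r; apply: subr_sol. Qed.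
Lemma fH : f * H = (H + 1) * f.
Proof. by rewrite mulrDl mul1r (subr_sol hHf) opprK. Qed.

Lemma e_ev p : e * ev p = ev (p \Po ('X - 1)) * e.
Proof.
elim/poly_ind: p => [|p c IH]; first by rewrite comp_poly0 !rmorph0 mulr0 mul0r.
rewrite comp_polyD comp_polyM comp_polyX comp_polyC !evD !evM evX !evC.
rewrite mulrDr mulrDl mulrA IH.
by rewrite -[_ * e * H]mulrA eH evB evX ev1 mulr_algr mulr_algl mulrA.
Qed.

Lemma f_ev p : f * ev p = ev (p \Po ('X + 1)) * f.
Proof.
elim/poly_ind: p => [|p c IH]; first by rewrite comp_poly0 !rmorph0 mulr0 mul0r.
rewrite comp_polyD comp_polyM comp_polyX comp_polyC !evD !evM evX !evC.
rewrite mulrDr mulrDl mulrA IH.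
by rewrite -[_ * f * H]mulrA fH evD evX ev1 mulr_algr mulr_algl mulrA.
Qed.


Lemma ev_e p : ev p * e = e * ev (p \Po ('X + 1)).
Proof.
rewrite e_ev -comp_polyA.
have -> : ('X + 1) \Po ('X - 1) = 'X :> {poly rat}.
  by rewrite comp_polyD comp_polyX -polyC1 comp_polyC polyC1 subrK.
by rewrite comp_polyXr.
Qed.

Lemma ev_f p : ev p * f = f * ev (p \Po ('X - 1)).
Proof.
rewrite f_ev -comp_polyA.
have -> : ('X - 1) \Po ('X + 1) = 'X :> {poly rat}.
  by rewrite comp_polyB comp_polyX -polyC1 comp_polyC polyC1 addrK.
by rewrite comp_polyXr.
Qed.

Definition shiftable (x : A) := forall p,
  (exists q, x * ev p = ev q * x) /\ (exists q, ev p * x = x * ev q).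

Lemma shiftable_e : shiftable e.
Proof. by move=> p; split; [exists (p \Po ('X - 1)); exact: e_ev| exists (p \Po ('X + 1)); exact: ev_e]. Qed.
Lemma shiftable_f : shiftable f.
Proof. by move=> p; split; [exists (p \Po ('X + 1)); exact: f_ev| exists (p \Po ('X - 1)); exact: ev_f]. Qed.

Lemma shiftable_pow x n : shiftable x -> shiftable (x ^+ n).
Proof.
move=> hx; elim: n => [|n IH] p.
  by rewrite expr0; split; exists p; rewrite mulr1 mul1r.
have [[q1 h1] [q2 h2]] := IH p; split.
  have [[q3 h3] _] := hx q1.
  by exists q3; rewrite exprS -mulrA h1 mulrA h3 -mulrA.
have [_ [q3 h3]] := hx q2.
by exists q3; rewrite exprSr mulrA h2 -[LHS]mulrA h3 mulrA.
Qed.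

Lemma He_pow m : H * e ^+ m = e ^+ m * (H + m%:R).
Proof.
elim: m => [|m IH]; first by rewrite expr0 mulr1 mul1r addr0.
have He' : H * e = e * (H + 1) by rewrite mulrDr mulr1 (subr_sol hHe) subrK.
rewrite exprSr [LHS]mulrA IH -[LHS]mulrA [(_ + _) * e]mulrDl He' mulr_natl -mulr_natr.
by rewrite -mulrDr [LHS]mulrA -addrA nat1r.
Qed.

Lemma fpow_H m : f ^+ m * H = (H + m%:R) * f ^+ m.
Proof.
elim: m => [|m IH]; first by rewrite expr0 mulr1 mul1r addr0.
rewrite exprSr -[LHS]mulrA fH [LHS]mulrA mulrDr mulr1 IH.
by rewrite -natr1 addrA !mulrDl mul1r !mulrA.
Qed.

Lemma H_fpow m : H * f ^+ m = f ^+ m * (H - m%:R).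
Proof.
have Hf' : H * f = f * (H - 1) by rewrite mulrBr mulr1 -hHf addrC subrK.
elim: m => [|m IH]; first by rewrite expr0 mulr1 mul1r subr0.
rewrite exprSr [LHS]mulrA IH -[LHS]mulrA mulrBl Hf' mulr_natl -mulr_natr -mulrBr [LHS]mulrA.
by rewrite -addrA -opprD nat1r.
Qed.

Lemma LE y (l : rat) : H * y = l *: y -> forall p, ev p * y = p.[l] *: y.
Proof.
move=> hy; elim/poly_ind => [|p c IH]; first by rewrite rmorph0 horner0 mul0r scale0r.
rewrite evD evM evX evC mulrDl -mulrA hy -scalerAr IH mulr_algl hornerMXaddC.
by rewrite scalerDl scalerA mulrC.
Qed.

Lemma RE y (l : rat) : y * H = l *: y -> forall p, y * ev p = p.[l] *: y.
Proof.
move=> hy; elim/poly_ind => [|p c IH]; first by rewrite rmorph0 horner0 mulr0 scale0r.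
rewrite evD evM evX evC mulrDr mulrA IH -scalerAl hy mulr_algr hornerMXaddC.
by rewrite scalerDl scalerA mulrC.
Qed.

Lemma mpol_neq0 (l : rat) : (forall i, (i <= d)%N -> l != i%:R) -> mpol.[l] != 0.
Proof.
move=> hl; rewrite /mpol horner_prod; apply/prodf_neq0 => i _.
by rewrite hornerXsubC subr_eq0 hl // -ltnS.
Qed.

Lemma VL y (l : rat) : H * y = l *: y -> (forall i, (i <= d)%N -> l != i%:R) -> y = 0.
Proof.
move=> hy hl; have := LE hy mpol; rewrite ev_m mul0r => /esym /eqP.
by rewrite scaler_eq0 (negbTE (mpol_neq0 hl)) /= => /eqP.
Qed.

Lemma VR y (l : rat) : y * H = l *: y -> (forall i, (i <= d)%N -> l != i%:R) -> y = 0.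
Proof.
move=> hy hl; have := RE hy mpol; rewrite ev_m mulr0 => /esym /eqP.
by rewrite scaler_eq0 (negbTE (mpol_neq0 hl)) /= => /eqP.
Qed.


Definition cL (nu : nat) : rat := (\prod_(i < d.+1 | i != nu :> nat) (nu%:R - i%:R : rat))^-1.
Definition RL (nu : nat) : {poly rat} := \prod_(i < d.+1 | i != nu :> nat) ('X - (i%:R : rat)%:P).
Definition L (nu : nat) : {poly rat} := cL nu *: RL nu.
Definition P (nu : nat) : A := ev (L nu).

Lemma RL_eval nu (x : rat) : (RL nu).[x] = \prod_(i < d.+1 | i != nu :> nat) (x - i%:R).
Proof. by rewrite /RL horner_prod; apply: eq_bigr => i _; rewrite hornerXsubC. Qed.

Lemma L_eval (j nu : nat) : (j <= d)%N -> (L nu).[j%:R] = (j == nu)%:R.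
Proof.
move=> jd; rewrite /L hornerZ RL_eval.
have jlt : (j < d.+1)%N by [].
case: eqP => [->|/eqP jnu].
  rewrite /cL mulVf //; apply/prodf_neq0 => i inu.
  by rewrite subr_eq0 eqr_nat eq_sym.
by rewrite (bigD1 (Ordinal jlt)) //= subrr mul0r mulr0.
Qed.

Lemma mpol_split (nu : nat) : (nu <= d)%N -> mpol = ('X - (nu%:R)%:P) * RL nu.
Proof.
move=> nud; have nult : (nu < d.+1)%N by [].
by rewrite /mpol (bigD1 (Ordinal nult)).
Qed.

Lemma H_P nu : (nu <= d)%N -> H * P nu = nu%:R *: P nu.
Proof.
move=> nud.
have h : ev (('X - (nu%:R)%:P) * L nu) = 0 by rewrite /L -scalerAr -mpol_split // evZ ev_m scaler0.
move: h; rewrite evM evXn => h.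
by apply/eqP; rewrite -subr_eq0 /P -mulr_algl algn -mulrBl h.
Qed.

Lemma size_RL nu : (nu <= d)%N -> (size (RL nu) <= d.+1)%N.
Proof.
move=> nud; have : size mpol = d.+2.
  by rewrite /mpol size_prod_XsubC /index_enum unlock /= -enumT size_enum_ord.
rewrite (mpol_split nud) size_monicM ?monicXsubC //; last first.
  by apply: monic_neq0; apply: monic_prod_XsubC.
by rewrite size_XsubC addnC addn2 /= => /eqP; rewrite eqSS => /eqP ->.
Qed.

Lemma sumL : \sum_(nu < d.+1) L nu = 1.
Proof.
apply/eqP; rewrite -subr_eq0; apply/eqP.
apply: (@roots_geq_poly_eq0 _ _ [seq (i%:R : rat) | i <- iota 0 d.+1]).
- apply/allP => x /mapP [j]; rewrite mem_iota add0n => jlt ->.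
  rewrite /root hornerD hornerN horner_sum hornerC.
  under eq_bigr do rewrite L_eval //.
  rewrite (bigD1 (Ordinal jlt)) //= eqxx big1 ?addr0 ?subrr //.
  by move=> i /eqP ne; case: eqP => // ej; case: ne; apply: val_inj.
- rewrite map_inj_uniq ?iota_uniq // => i k /eqP; rewrite eqr_nat => /eqP //.
rewrite size_map size_iota; apply: leq_trans (size_polyD _ _) _.
rewrite geq_max size_polyN size_poly1 andbT.
apply: leq_trans (size_sum _ _ _) _; apply/bigmax_leqP => i _.
by apply: leq_trans (size_scale_leq _ _) _; apply: size_RL; rewrite -ltnS.
Qed.

Lemma sumP : \sum_(nu < d.+1) P nu = 1.
Proof. by rewrite /P -rmorph_sum sumL rmorph1. Qed.

Lemma decomp y : y = \sum_(nu < d.+1) y * P nu.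
Proof. by rewrite -mulr_sumr sumP mulr1. Qed.

Lemma ev_P p nu : (nu <= d)%N -> ev p * P nu = p.[nu%:R] *: P nu.
Proof. by move=> nud; apply: LE; apply: H_P. Qed.

Lemma P_H nu : (nu <= d)%N -> P nu * H = nu%:R *: P nu.
Proof. by move=> nud; rewrite -evX /P ev_comm evX H_P. Qed.

Lemma V1 m nu : (nu <= d)%N -> (d < nu + m)%N -> e ^+ m * P nu = 0.
Proof.
move=> nud lt; apply: (@VL _ (nu + m)%:R).
  by rewrite mulrA He_pow -mulrA mulrDl H_P // mulr_natl -scaler_nat -scalerDl -scalerAr natrD.
move=> i id; rewrite eqr_nat; apply/eqP => ei; move: lt; rewrite ei ltnNge id.
by [].
Qed.

Lemma V2 m nu : (nu <= d)%N -> (d < nu + m)%N -> P nu * f ^+ m = 0.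
Proof.
move=> nud lt; apply: (@VR _ (nu + m)%:R).
  by rewrite -mulrA fpow_H mulrA mulrDr P_H // mulr_natr -scaler_nat -scalerDl -scalerAl natrD.
move=> i id; rewrite eqr_nat; apply/eqP => ei; move: lt; rewrite ei ltnNge id.
by [].
Qed.

Lemma V3 m nu : (nu <= d)%N -> (nu < m)%N -> f ^+ m * P nu = 0.
Proof.
move=> nud lt; apply: (@VL _ (nu%:R - m%:R)).
  by rewrite mulrA H_fpow -mulrA mulrBl H_P // mulr_natl -scaler_nat -scalerBl -scalerAr.
move=> i id; rewrite subr_eq -natrD eqr_nat; apply/eqP => ei; move: lt; rewrite ei.
by rewrite ltnNge leq_addl.
Qed.

Lemma sum_delta n k (F : nat -> A) : (k < n)%N ->
  \sum_(i < n) ((i : nat) == k)%:R *: F i = F k.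
Proof.
move=> kn; rewrite (bigD1 (Ordinal kn)) //= eqxx scale1r big1 ?addr0 //.
move=> i /eqP ne; case: eqP => [ei|]; last by rewrite scale0r.
by case: ne; apply: val_inj.
Qed.

Lemma fP_eig c nu : (nu <= d)%N -> (c <= nu)%N ->
  H * (f ^+ c * P nu) = (nu - c)%:R *: (f ^+ c * P nu).
Proof.
move=> nud cnu; rewrite mulrA H_fpow -mulrA mulrBl H_P // natrB //.
by rewrite mulr_natl -scaler_nat -scalerBl -scalerAr.
Qed.

Lemma SH mu c : (mu + c <= d)%N -> P mu * f ^+ c = f ^+ c * P (mu + c).
Proof.
move=> le; rewrite [LHS]decomp -[RHS](@sum_delta d.+1 (mu + c) (fun nu => f ^+ c * P nu)) //.
apply: eq_bigr => i _; have id : (i <= d)%N by rewrite -ltnS.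
case: (ltnP i c) => ic.
  rewrite -mulrA V3 // mulr0 scaler0 //.
rewrite -mulrA [P mu]/P (LE (fP_eig id ic)).
rewrite L_eval; last by apply: leq_trans (leq_subr _ _) id.
by rewrite -(eqn_add2r c) subnK.
Qed.

Lemma B_eval j (nu : nat) : (nu < j)%N ->
  (\prod_(i < j) ('X - (i%:R : rat)%:P)).[nu%:R] = 0.
Proof.
move=> lt; rewrite horner_prod (bigD1 (Ordinal lt)) //= hornerXsubC subrr mul0r //.
Qed.

Definition Gset (x y : A) (h : nat) (u : A) : Prop :=
  exists a c p, (a + c <= h)%N /\ u = y ^+ c * ev p * x ^+ a.

Lemma Gset_scale x y h k u : Gset x y h u -> Gset x y h (k *: u).
Proof.
move=> [a [c [p [le ->]]]]; exists a, c, (k *: p); split => //.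
by rewrite evZ scalerAl scalerAr.
Qed.

Lemma Gset_mono x y h h' u : (h <= h')%N -> Gset x y h u -> Gset x y h' u.
Proof. by move=> hh [a [c [p [le ->]]]]; exists a, c, p; split => //; apply: leq_trans hh. Qed.

Lemma Gset_mulr x y h p u : shiftable x -> SP (Gset x y h) u -> SP (Gset x y h) (u * ev p).
Proof.
move=> sx; apply: (@SP_map _ _ _ (fun u => u * ev p)); first by rewrite mul0r.
  by move=> ??; rewrite mulrDl.
move=> _ [a [c [q [le ->]]]]; have [[q' h'] _] := shiftable_pow a sx p.
by apply: SP_in; exists a, c, (q * q'); split => //; rewrite -!mulrA h' evM !mulrA.
Qed.

Lemma tele (a b c : A) : (a - b) + (b - c) = a - c.
Proof. by rewrite addrA subrK. Qed.

Lemma C1 x y : shiftable y -> (exists r, x * y - y * x = ev r) ->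
  forall c, exists g, x * y ^+ c.+1 - y ^+ c.+1 * x = y ^+ c * ev g.
Proof.
move=> sy [r hr]; elim=> [|c [g hg]].
  by exists r; rewrite expr1 expr0 mul1r.
have [_ [g' hg']] := sy g.
exists (r + g').
have hxy : x * y = y * x + ev r by rewrite -hr addrC subrK.
have hg2 : x * y ^+ c.+1 = y ^+ c.+1 * x + y ^+ c * ev g by rewrite -hg addrC subrK.
have -> : x * y ^+ c.+2 = x * y ^+ c.+1 * y by rewrite [y ^+ c.+2]exprSr mulrA.
rewrite hg2 mulrDl -[y ^+ c.+1 * x * y]mulrA hxy mulrDr mulrA -exprSr.
rewrite -[y ^+ c * ev g * y]mulrA hg' mulrA -exprSr evD mulrDr.
by rewrite [LHS]addrC !addrA addNr add0r.
Qed.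

Lemma xG x y h u : shiftable x -> shiftable y -> (exists r, x * y - y * x = ev r) ->
  Gset x y h u -> SP (Gset x y h.+1) (x * u).
Proof.
move=> sx sy hr [a [c [p [le ->]]]].
have [[q hq] _] := sx p.
case: c le => [|c] le.
  apply: SP_in; exists a.+1, 0%N, q; split; first by rewrite addn0 ltnS -[a]addn0.
  by rewrite !expr0 !mul1r mulrA hq -mulrA -exprS.
have [g hg] := C1 sy hr c.
have hg2 : x * y ^+ c.+1 = y ^+ c.+1 * x + y ^+ c * ev g by rewrite -hg addrC subrK.
rewrite !mulrA hg2 mulrDl mulrDl; apply: SP_add; apply: SP_in.
  exists a.+1, c.+1, q; split; first by rewrite addSn ltnS.
  by rewrite -[y ^+ c.+1 * x * ev p]mulrA hq !mulrA -[_ * x * x ^+ a]mulrA -exprS.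
exists a, c, (g * p); split; first by lia.
by rewrite evM !mulrA.
Qed.

Lemma C2 x y : shiftable x -> shiftable y -> (exists r, x * y - y * x = ev r) ->
  forall a c, SP (Gset x y (a + c)) (x ^+ a.+1 * y ^+ c.+1 - y ^+ c.+1 * x ^+ a.+1).
Proof.
move=> sx sy hr; elim=> [|a IH] c.
  have [g hg] := C1 sy hr c.
  apply: SP_in; exists 0%N, c, g; split => //.
  by rewrite expr1 hg expr0 mulr1.
have -> : x ^+ a.+2 * y ^+ c.+1 - y ^+ c.+1 * x ^+ a.+2 =
   x * (x ^+ a.+1 * y ^+ c.+1 - y ^+ c.+1 * x ^+ a.+1) +
   (x * y ^+ c.+1 - y ^+ c.+1 * x) * x ^+ a.+1.
  rewrite mulrBr mulrBl [x * (x ^+ a.+1 * _)]mulrA [x * (y ^+ c.+1 * _)]mulrA -exprS.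
  by rewrite -[y ^+ c.+1 * x * _]mulrA -exprS tele.
apply: SP_add.
  rewrite addSn; apply: (@SP_map _ _ _ (fun u => x * u)) (IH c); first by rewrite mulr0.
    by move=> ??; rewrite mulrDr.
  by move=> u; apply: xG.
have [g hg] := C1 sy hr c.
by apply: SP_in; exists a.+1, c, g; split => //; rewrite hg.
Qed.

Hypothesis hcef : exists r, e * f - f * e = ev r.

Lemma hcfe : exists r, f * e - e * f = ev r.
Proof.
have evN q : ev (- q) = - ev q by exact: rmorphN.
by have [r hr] := hcef; exists (- r); rewrite evN -hr opprB.
Qed.

Definition Bp (b : nat) : {poly rat} := \prod_(i < b) ('X - (i%:R : rat)%:P).

Definition Mon (h : nat) (u : A) : Prop :=
  exists a b c k, (a + b + c <= d)%N /\ (a + c < h)%N /\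
    u = k *: (e ^+ a * ev (Bp b) * f ^+ c).

Lemma Mon_scale h k u : Mon h u -> Mon h (k *: u).
Proof.
by move=> [a [b [c [k' [h1 [h2 ->]]]]]]; exists a, b, c, (k * k'); rewrite scalerA.
Qed.

Lemma Mon_mono h h' u : (h <= h')%N -> Mon h u -> Mon h' u.
Proof.
move=> hh [a [b [c [k' [h1 [h2 ->]]]]]]; exists a, b, c, k'; split => //; split => //.
by apply: leq_trans hh.
Qed.

Lemma FE2EF h u : Gset e f h u -> SP (Gset f e h) u.
Proof.
move=> [a [c [p [le ->]]]].
have [_ [q hq]] := shiftable_pow a shiftable_e p.
rewrite -mulrA hq mulrA.
case: a le hq => [|a] le hq.
  have [[q' hq'] _] := shiftable_pow c shiftable_f q.
  apply: SP_in; exists c, 0%N, q'; split; first by lia.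
  by rewrite !expr0 mulr1 mul1r hq'.
case: c le => [|c] le.
  by apply: SP_in; exists 0%N, a.+1, q; split; [lia| rewrite !expr0 mul1r mulr1].
have -> : f ^+ c.+1 * e ^+ a.+1 * ev q =
   (f ^+ c.+1 * e ^+ a.+1 - e ^+ a.+1 * f ^+ c.+1) * ev q + e ^+ a.+1 * (f ^+ c.+1 * ev q).
  by rewrite mulrBl [e ^+ a.+1 * (_ * _)]mulrA subrK.
apply: SP_add.
  apply: (@SP_mono _ (Gset f e (c + a))); first by move=> w; apply: Gset_mono; lia.
  apply: Gset_mulr; first exact: shiftable_f.
  exact: (C2 shiftable_f shiftable_e hcfe).
have [[q' hq'] _] := shiftable_pow c.+1 shiftable_f q.
by apply: SP_in; exists c.+1, a.+1, q'; split; [lia| rewrite hq' mulrA].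
Qed.

Definition Bset (u : A) : Prop := exists j (k : rat), u = k *: ev (Bp j).

Lemma BpS j : Bp j.+1 = Bp j * ('X - (j%:R)%:P).
Proof. by rewrite /Bp big_ord_recr. Qed.

Lemma BE p : SP Bset (ev p).
Proof.
elim/poly_ind: p => [|p c IH]; first by rewrite rmorph0; apply: SP0.
rewrite evD evM evX evC; apply: SP_add.
  apply: (@SP_map _ _ _ (fun u => u * H)) IH; first by rewrite mul0r.
    by move=> ??; rewrite mulrDl.
  move=> _ [j [k ->]].
  have -> : k *: ev (Bp j) * H = k *: ev (Bp j.+1) + (k * j%:R) *: ev (Bp j).
    have e1 : ev (Bp j) * H = ev (Bp j.+1) + (j%:R : rat) *: ev (Bp j).
      by rewrite BpS evM evXn mulrBr scaler_nat mulr_natr subrK.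
    by rewrite -scalerAl e1 scalerDr scalerA.
  by apply: SP_add; apply: SP_in; [exists j.+1, k| exists j, (k * j%:R)].
apply: SP_in; exists 0%N, c; by rewrite /Bp big_ord0 ev1.
Qed.

Definition MAINstmt (h : nat) := forall a c p, (a + c)%N = h ->
  SP (Mon h.+1) (e ^+ a * ev p * f ^+ c).

Lemma KEY h (IH : forall h', (h' < h)%N -> MAINstmt h') a nu c :
  (a + c)%N = h -> (nu <= d)%N -> (d < nu + a + c)%N ->
  SP (Mon h) (e ^+ a * P nu * f ^+ c).
Proof.
move=> hac nud lt.
case: (ltnP d (nu + c)) => lt2.
  by rewrite -mulrA V2 // mulr0; apply: SP0.
case: (ltnP d (nu + a)) => lt3.
  by rewrite V1 // mul0r; apply: SP0.
case: a hac lt lt3 => [|a] hac lt lt3; first by lia.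
case: c hac lt lt2 => [|c] hac lt lt2; first by lia.
rewrite -mulrA SH // mulrA.
have -> : e ^+ a.+1 * f ^+ c.+1 * P (nu + c.+1) =
   (e ^+ a.+1 * f ^+ c.+1 - f ^+ c.+1 * e ^+ a.+1) * P (nu + c.+1).
  by rewrite mulrBl -[f ^+ _ * _ * _]mulrA V1 ?mulr0 ?subr0 //; lia.
have h1 := Gset_mulr (L (nu + c.+1)) shiftable_e (C2 shiftable_e shiftable_f hcef a c).
have h2 := SP_flat (@FE2EF _) h1.
apply: (SP_flat _ h2) => _ [a1 [c1 [p [le ->]]]].
apply: (@SP_mono _ (Mon (c1 + a1).+1)); first by move=> u; apply: Mon_mono; lia.
by apply: (IH (c1 + a1)%N) => //; lia.
Qed.

Lemma KEY' h (IH : forall h', (h' < h)%N -> MAINstmt h') a j c :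
  (a + c)%N = h -> (d < a + j + c)%N ->
  SP (Mon h) (e ^+ a * ev (Bp j) * f ^+ c).
Proof.
move=> hac lt; rewrite [ev (Bp j)]decomp mulr_sumr mulr_suml; apply: SP_sum => i.
have id : (i <= d)%N by rewrite -ltnS.
rewrite ev_P // -scalerAr -scalerAl.
case: (ltnP i j) => ij.
  by rewrite /Bp B_eval // scale0r; apply: SP0.
apply: SP_scale; first by move=> ??; apply: Mon_scale.
by apply: KEY => //; lia.
Qed.

Lemma MAIN h : MAINstmt h.
Proof.
elim/ltn_ind: h => h IH a c p hac.
apply: (@SP_map _ _ _ (fun u => e ^+ a * u * f ^+ c)) (BE p).
- by rewrite mulr0 mul0r.
- by move=> ??; rewrite mulrDr mulrDl.
move=> _ [j [k ->]]; rewrite -scalerAr -scalerAl.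
case: (leqP (a + j + c) d) => le.
  by apply: SP_in; exists a, j, c, k; split => //; split => //; lia.
apply: SP_scale; first by move=> ??; apply: Mon_scale.
apply: (@SP_mono _ (Mon h)); first by move=> u; apply: Mon_mono.
exact: KEY'.
Qed.

Lemma evBp b : ev (Bp b) = \prod_(i < b) (H - i%:R).
Proof. rewrite /Bp rmorph_prod; apply: eq_bigr => i _; exact: evXn. Qed.

Lemma fact_neq0 n : (n`!%:R : rat) != 0.
Proof. by rewrite pnatr_eq0 -lt0n fact_gt0. Qed.

Definition kap a b c : rat := (a`!%:R)^-1 * (b`!%:R)^-1 * (c`!%:R)^-1.

Lemma kap_neq0 a b c : kap a b c != 0.
Proof. by rewrite /kap !mulf_neq0 // invr_neq0 // fact_neq0. Qed.

Lemma monoEF_eq a b c :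
  monoEF e f H (a, b, c) = kap a b c *: (e ^+ a * ev (Bp b) * f ^+ c).
Proof.
rewrite /monoEF /divpow /binomA /= -evBp -!scalerAl -!scalerAr !scalerA /kap.
by rewrite -scalerAl scalerA mulrAC.
Qed.

Lemma Mon_seq h u : SP (Mon h) u ->
  exists s : seq (rat * (nat * nat * nat)),
    all (fun p => (deg p.2 < d.+1)%N && (height p.2 < h)%N) s /\
    u = \sum_(p <- s) p.1 *: monoEF e f H p.2.
Proof.
elim=> [|_ v [a [b [c [k [h1 [h2 ->]]]]]] _ [s [hs ->]]].
  by exists [::]; rewrite big_nil.
exists ((k / kap a b c, (a, b, c)) :: s); split.
  by rewrite /= hs andbT /deg /height /=; apply/andP; split; lia.
by rewrite big_cons /= monoEF_eq scalerA divfK // kap_neq0.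
Qed.

Lemma part1 a b c : (a + b + c)%N = d.+1 ->
  exists s : seq (rat * (nat * nat * nat)),
    all (fun p => (deg p.2 < d.+1)%N && (height p.2 < a + c)%N) s /\
    monoEF e f H (a, b, c) = \sum_(p <- s) p.1 *: monoEF e f H p.2.
Proof.
move=> habc; apply: Mon_seq; rewrite monoEF_eq; apply: SP_scale.
  by move=> ??; apply: Mon_scale.
by apply: (@KEY' (a + c)) => //; [move=> h' _; exact: MAIN | lia].
Qed.

Lemma hm2 : \prod_(i < d.+1) (d%:R - H - i%:R) = 0.
Proof.
have -> : \prod_(i < d.+1) (d%:R - H - i%:R) =
    ev (\prod_(i < d.+1) ((d%:R : rat)%:P - 'X - (i%:R)%:P)).
  have ee (i : nat) : ev ((d%:R : rat)%:P - 'X - (i%:R)%:P) = d%:R - H - i%:R.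
    by rewrite !evB evX !evC !algn.
  by rewrite rmorph_prod; apply: eq_bigr => i _; exact/esym/ee.
rewrite [LHS]decomp big1 // => i _; have id : (i <= d)%N by rewrite -ltnS.
rewrite ev_P // horner_prod.
have lt : (d - i < d.+1)%N by rewrite ltnS leq_subr.
by rewrite (bigD1 (Ordinal lt)) //= !hornerE natrB // subrr mul0r scale0r.
Qed.
End Alg.

Lemma part1_all d (A : algType rat) (e f H1 H2 : A) :
  Bd_rel d e f H1 H2 ->
  forall a b c : nat, (a + b + c)%N = d.+1 ->
     exists s : seq (rat * (nat * nat * nat)),
       all (fun p => (deg p.2 < d.+1)%N && (height p.2 < a + c)%N) s /\
       monoEF e f H1 (a, b, c) = \sum_(p <- s) p.1 *: monoEF e f H1 p.2.
Proof.
move=> [hc [hHe [hHf [_ [_ [hef [hsum hm]]]]]]] a b c habc.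
apply: (part1 hHe hHf hm) habc.
exists ('X - ((d%:R : rat)%:P - 'X)).
have eH2 : H2 = d%:R - H1 by rewrite -hsum addrAC subrr add0r.
rewrite hef eH2 (evB H1) (evB H1) (evX H1) (evC H1).
by rewrite scaler_nat.
Qed.

Lemma Bd_swap d (A : algType rat) (e f H1 H2 : A) :
  Bd_rel d e f H1 H2 -> Bd_rel d f e H2 H1.
Proof.
move=> [hc [hHe [hHf [hH2e [hH2f [hef [hsum hm]]]]]]].
have eH2 : H2 = d%:R - H1 by rewrite -hsum addrAC subrr add0r.
split; first by [].
split; first by [].
split; first by [].
split; first by [].
split; first by [].
split; first by rewrite -[H2 - H1]opprB -hef opprB.
split; first by rewrite addrC.
by rewrite eH2; apply: hm2.
Qed.

Unset Implicit Arguments.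
Set Strict Implicit.

Theorem theorem4p5 (d : nat) (A : algType rat) (e f H1 H2 : A) :
  Bd_rel d e f H1 H2 ->
  (forall a b c : nat, (a + b + c)%N = d.+1 ->
     exists s : seq (rat * (nat * nat * nat)),
       all (fun p => (deg p.2 < d.+1)%N && (height p.2 < a + c)%N) s /\
       monoEF e f H1 (a, b, c) = \sum_(p <- s) p.1 *: monoEF e f H1 p.2) /\
  (forall a b c : nat, (a + b + c)%N = d.+1 ->
     exists s : seq (rat * (nat * nat * nat)),
       all (fun p => (deg p.2 < d.+1)%N && (height p.2 < a + c)%N) s /\
       monoFE e f H2 (a, b, c) = \sum_(p <- s) p.1 *: monoFE e f H2 p.2).
Proof.
move=> hB; split; first exact: part1_all hB.
exact: part1_all (Bd_swap hB).
Qed.
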